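(* Let $\mathbf P=(P,\leq,{}',0,1)$ be an orthogonal lub-complete poset. Then the following conditions are equivalent: (i) $\mathbf P$ is a Boolean poset. (ii) For all $x,y\in P$, $x\leq y$ if and only if $x\rightarrow_C y=1$. (iii) $\mathbf P$ is a Boolean algebra.
   Context: $(P,\leq,{}',0,1)$ is a bounded poset with an antitone involution ${}'$ ($x\leq y\Rightarrow y'\leq x'$, $x''=x$); orthogonal means $x\leq y'$ implies $x\vee y$ exists; lub-complete means for every lower bound $x$ of a finite subset $M$ there is a maximal lower bound of $M$ above $x$. For $A\subseteq P$, $U(A)$ is the upper cone, $U(x,y)=U(\{x,y\})$, and $\mathrm{Min}\,A$ is the set of minimal elements of $A$. The classical implication is $x\rightarrow_C y:=\mathrm{Min}\,U(x',y)$; $x\rightarrow_C y=1$ means it equals $\{1\}$. $\mathbf P$ is a Boolean poset if it is distributive ($L(U(x,y),z)=LU(L(x,z),L(y,z))$, with $L$ the lower cone) and complemented (each $x$ has $y$ with $L(x,y)=L(P)$, $U(x,y)=U(P)$). *)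

(* Defs.v *)
From Stdlib Require Import List.
Set Implicit Arguments.

Section PosetDefs.
Variables (P : Type) (le : P -> P -> Prop) (c : P -> P) (z o : P).

Definition Upper (A : P -> Prop) : P -> Prop := fun u => forall a, A a -> le a u.
Definition Lower (A : P -> Prop) : P -> Prop := fun l => forall a, A a -> le l a.
Definition pair (x y : P) : P -> Prop := fun w => w = x \/ w = y.
Definition Min (A : P -> Prop) : P -> Prop :=
  fun m => A m /\ forall a, A a -> le a m -> a = m.
Definition set_eq (A B : P -> Prop) : Prop := forall w, A w <-> B w.
Definition whole : P -> Prop := fun _ => True.
Definition single (x : P) : P -> Prop := fun w => w = x.
Definition union (A B : P -> Prop) : P -> Prop := fun w => A w \/ B w.

(* bounded poset with antitone involution ' = c, bottom z, top o *)
Definition bounded_poset_inv : Prop :=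
  (forall x, le x x) /\
  (forall x y, le x y -> le y x -> x = y) /\
  (forall x y w, le x y -> le y w -> le x w) /\
  (forall x, le z x) /\ (forall x, le x o) /\
  (forall x y, le x y -> le (c y) (c x)) /\
  (forall x, c (c x) = x).

Definition is_sup (x y s : P) : Prop := Upper (pair x y) s /\ forall u, Upper (pair x y) u -> le s u.
Definition is_inf (x y m : P) : Prop := Lower (pair x y) m /\ forall l, Lower (pair x y) l -> le l m.

Definition orthogonal : Prop := forall x y, le x (c y) -> exists s, is_sup x y s.

Definition lub_complete : Prop :=
  forall (M : list P) x, Lower (fun w => In w M) x ->
    exists w, Lower (fun v => In v M) w /\ le x w /\
      forall v, Lower (fun u => In u M) v -> le w v -> v = w.

Definition distributive_poset : Prop :=
  forall x y w,
    set_eq (Lower (union (Upper (pair x y)) (single w)))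
           (Lower (Upper (union (Lower (pair x w)) (Lower (pair y w))))).

Definition complemented_by_c : Prop :=
  forall x, set_eq (Lower (pair x (c x))) (Lower whole) /\
            set_eq (Upper (pair x (c x))) (Upper whole).

Definition boolean_poset : Prop := distributive_poset /\ complemented_by_c.

Definition impl_C (x y : P) : P -> Prop := Min (Upper (pair (c x) y)).

Definition boolean_algebra : Prop :=
  exists (j m : P -> P -> P),
    (forall x y, is_sup x y (j x y)) /\ (forall x y, is_inf x y (m x y)) /\
    (forall x y w, m x (j y w) = j (m x y) (m x w)) /\
    (forall x, m x (c x) = z /\ j x (c x) = o).
End PosetDefs.

(* Main.v *)
Require Import Defs.
From Stdlib Require Import List Setoid IndefiniteDescription.

Theorem theorem2 (P : Type) (le : P -> P -> Prop) (c : P -> P) (z o : P)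
  (HP : bounded_poset_inv le c z o)
  (Hort : orthogonal le c)
  (Hlub : lub_complete le) :
  (boolean_poset le c <->
     (forall x y, le x y <-> set_eq (impl_C le c x y) (single o))) /\
  ((forall x y, le x y <-> set_eq (impl_C le c x y) (single o)) <->
     boolean_algebra le c z o).
Proof.
  destruct HP as (Hrefl & Hanti & Htrans & Hz & Ho & Hc & Hcc).
  assert (Hcle : forall x y, le (c x) y -> le (c y) x).
  { intros x y H. rewrite <- (Hcc x). apply Hc in H. rewrite Hcc in H. rewrite Hcc. exact H. }
  assert (Hlec : forall x y, le x (c y) -> le y (c x)).
  { intros x y H. apply Hc in H. rewrite Hcc in H. exact H. }
  assert (Hcz : c z = o).
  { apply Hanti; [apply Ho|]. apply Hlec. apply Hz. }
  assert (Hco : c o = z). { rewrite <- Hcz, Hcc. reflexivity. }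
  assert (minub : forall a b t, le a t -> le b t -> exists m, le a m /\ le b m /\ le m t /\
            forall v, le a v -> le b v -> le v m -> v = m).
  { intros a b t Ha Hb.
    destruct (Hlub (c a :: c b :: nil) (c t)) as (w & Hw1 & Hw2 & Hw3).
    - intros v [<-|[<-|[]]]; apply Hc; auto.
    - exists (c w). split; [apply Hlec; apply Hw1; simpl; auto|].
      split; [apply Hlec; apply Hw1; simpl; auto|].
      split; [apply Hcle; exact Hw2|].
      intros v Hav Hbv Hvm.
      assert (E : c v = w).
      { apply Hw3.
        - intros u [<-|[<-|[]]]; apply Hc; auto.
        - apply Hlec. exact Hvm. }
      rewrite <- E, Hcc. reflexivity. }
  assert (EB : (forall x y, le x y <-> set_eq (impl_C le c x y) (single o)) <->
               (forall x y, le x y <-> (forall s, le (c x) s -> le y s -> s = o))).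
  { assert (impl_iff : forall x y, set_eq (impl_C le c x y) (single o) <->
              (forall s, le (c x) s -> le y s -> s = o)).
    { intros x y. split.
      - intros H s H1 H2. destruct (minub (c x) y s H1 H2) as (m & Hm1 & Hm2 & Hm3 & Hm4).
        assert (E : m = o).
        { apply (proj1 (H m)). unfold impl_C, Min, Upper, pair. split.
          - intros a [-> | ->]; auto.
          - intros a Ha Ham. apply Hm4; auto; apply Ha; auto. }
        subst m. apply Hanti; auto.
      - intros H w. unfold impl_C, Min, Upper, pair, single. split.
        + intros [Hw _]. apply H; apply Hw; auto.
        + intros ->. split.
          * intros a [-> | ->]; auto.
          * intros a Ha _. apply H; apply Ha; auto. }
    split; intros H x y; rewrite H; rewrite impl_iff; reflexivity. }
  rewrite EB. clear EB.
  assert (AB : boolean_poset le c ->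
     (forall x y, le x y <-> (forall s, le (c x) s -> le y s -> s = o))).
  { intros [Hd Hcomp] x y. split.
    - intros Hxy s H1 H2. destruct (Hcomp x) as [_ HU].
      assert (Hw : Upper le (whole (P:=P)) s).
      { apply HU. intros a [-> | ->]; eauto. }
      apply Hanti; [apply Ho|]. apply Hw. exact I.
    - intros H. destruct (Hd (c x) y x x) as [H1 _].
      assert (Hx : Lower le (Upper le (union (Lower le (pair (c x) x)) (Lower le (pair y x)))) x).
      { apply H1. intros a [Ha|Ha].
        - rewrite (H a); auto. apply Ha; left; auto. apply Ha; right; auto.
        - unfold single in Ha. subst a. auto. }
      apply Hx. intros b [Hb|Hb].
      + destruct (Hcomp x) as [HL _].
        assert (Hw : Lower le (whole (P:=P)) b).
        { apply HL. intros a [-> | ->]; apply Hb; unfold pair; auto. }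
        apply Hw. exact I.
      + apply Hb. left; auto. }
  assert (BC : (forall x y, le x y <-> (forall s, le (c x) s -> le y s -> s = o)) ->
               boolean_algebra le c z o).
  { intros HB.
    assert (Hsep : forall t y, (forall r, le r t -> le r y -> r = z) -> le t (c y)).
    { intros t y H. apply HB. intros s H1 H2.
      assert (E : c s = z).
      { apply H. apply Hcle; auto. apply Hcle. auto. }
      rewrite <- (Hcc s), E. exact Hcz. }
    assert (Hcompl : forall x r, le r x -> le r (c x) -> r = z).
    { intros x r H1 H2. assert (E : c r = o).
      { apply (proj1 (HB x x) (Hrefl x)).
        - apply Hc; auto.
        - apply Hlec; auto. }
      rewrite <- (Hcc r), E. exact Hco. }
    assert (Hjoin : forall x y, exists s, is_sup le x y s).
    { intros x y. destruct (minub x y o (Ho x) (Ho y)) as (u & Hu1 & Hu2 & _ & Humin).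
      exists u. split.
      - intros a [-> | ->]; auto.
      - intros t Ht.
        destruct (minub x y t (Ht x (or_introl eq_refl)) (Ht y (or_intror eq_refl)))
          as (v & Hv1 & Hv2 & Hvt & _).
        apply Htrans with v; auto.
        rewrite <- (Hcc v). apply Hsep. intros r Hru Hrv.
        assert (Hrx : le r (c x)) by (apply Htrans with (c v); auto).
        assert (Hry : le r (c y)) by (apply Htrans with (c v); auto).
        destruct (Hort r (c u)) as (s & Hs1 & Hs2).
        { rewrite Hcc. auto. }
        assert (E : c s = u).
        { apply Humin.
          - apply Hlec. apply Hs2. intros a [-> | ->]; auto.
          - apply Hlec. apply Hs2. intros a [-> | ->]; auto.
          - apply Hcle. apply Hs1. right; auto. }
        assert (Hurc : le u (c r)).
        { rewrite <- E. apply Hc. apply Hs1. left; auto. }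
        apply (Hcompl r r (Hrefl r)). apply Htrans with u; auto. }
    pose (j := fun x y => proj1_sig (constructive_indefinite_description _ (Hjoin x y))).
    assert (Hj : forall x y, is_sup le x y (j x y)).
    { intros x y. exact (proj2_sig (constructive_indefinite_description _ (Hjoin x y))). }
    clearbody j.
    assert (sup_inf : forall a b s, is_sup le a b s -> is_inf le (c a) (c b) (c s)).
    { intros a b s [Hs1 Hs2]. split.
      - intros w [-> | ->]; apply Hc; apply Hs1; [left|right]; auto.
      - intros l Hl. apply Hlec. apply Hs2. intros w [-> | ->]; apply Hlec; apply Hl;
        [left|right]; auto. }
    pose (m := fun x y => c (j (c x) (c y))).
    assert (Hm : forall x y, is_inf le x y (m x y)).
    { intros x y. pose proof (sup_inf _ _ _ (Hj (c x) (c y))) as H.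
      rewrite !Hcc in H. exact H. }
    clearbody m.
    exists j, m. split; [exact Hj|]. split; [exact Hm|]. split.
    - intros x y w. apply Hanti.
      + rewrite <- (Hcc (j (m x y) (m x w))). apply Hsep. intros r Hra Hrb.
        destruct (Hm x (j y w)) as [Ha1 _].
        assert (Hrx : le r x) by (apply Htrans with (m x (j y w)); auto; apply Ha1; left; auto).
        assert (Hrj : le r (j y w)) by (apply Htrans with (m x (j y w)); auto; apply Ha1; right; auto).
        assert (Hyy : forall q, le q r -> le q (c y)).
        { intros q Hq. apply Htrans with r; auto. apply Hsep. intros q' H1 H2.
          apply (Hcompl (j (m x y) (m x w))).
          - apply Htrans with (m x y).
            + apply (proj2 (Hm x y)). intros a [-> | ->]; auto. apply Htrans with r; auto.
            + apply (proj1 (Hj (m x y) (m x w))). left; auto.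
          - apply Htrans with r; auto. }
        assert (Hww : le r (c w)).
        { apply Hsep. intros q' H1 H2.
          apply (Hcompl (j (m x y) (m x w))).
          - apply Htrans with (m x w).
            + apply (proj2 (Hm x w)). intros a [-> | ->]; auto. apply Htrans with r; auto.
            + apply (proj1 (Hj (m x y) (m x w))). right; auto.
          - apply Htrans with r; auto. }
        apply (Hcompl (j y w)); auto.
        apply (proj2 (sup_inf _ _ _ (Hj y w))). intros a [-> | ->]; auto.
      + apply (proj2 (Hj (m x y) (m x w))). intros q [-> | ->]; apply (proj2 (Hm x (j y w)));
        intros a [-> | ->].
        * apply (proj1 (Hm x y)); left; auto.
        * apply Htrans with y. apply (proj1 (Hm x y)); right; auto.
          apply (proj1 (Hj y w)); left; auto.
        * apply (proj1 (Hm x w)); left; auto.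
        * apply Htrans with w. apply (proj1 (Hm x w)); right; auto.
          apply (proj1 (Hj y w)); right; auto.
    - intros x. split.
      + apply (Hcompl x); apply (proj1 (Hm x (c x))); [left|right]; auto.
      + rewrite <- (Hcc (j x (c x))).
        rewrite (Hcompl x (c (j x (c x)))). exact Hcz.
        * pose proof (proj1 (sup_inf _ _ _ (Hj x (c x)))) as H. rewrite Hcc in H.
          apply H; right; auto.
        * apply (proj1 (sup_inf _ _ _ (Hj x (c x)))). left; auto. }
  assert (CA : boolean_algebra le c z o -> boolean_poset le c).
  { intros (j & m & Hj & Hm & Hd & Hcm). split.
    - intros x y w v. split.
      + intros Hv. assert (Hv' : le v (j (m w x) (m w y))).
        { rewrite <- Hd. apply (proj2 (Hm w (j x y))). intros a [-> | ->].
          - apply Hv. right. reflexivity.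
          - apply Hv. left. apply (proj1 (Hj x y)). }
        intros u Hu. apply Htrans with (j (m w x) (m w y)); auto.
        apply (proj2 (Hj _ _)). intros a [-> | ->]; apply Hu; [left|right];
          intros b [-> | ->]; apply (proj1 (Hm _ _)); unfold pair; auto.
      + intros Hv.
        assert (Hv' : le v (m w (j x y))).
        { rewrite Hd. apply Hv. intros b [Hb|Hb].
          - apply Htrans with (m w x); [|apply (proj1 (Hj _ _)); left; auto].
            apply (proj2 (Hm _ _)). intros a [-> | ->]; apply Hb; unfold pair; auto.
          - apply Htrans with (m w y); [|apply (proj1 (Hj _ _)); right; auto].
            apply (proj2 (Hm _ _)). intros a [-> | ->]; apply Hb; unfold pair; auto. }
        intros a [Ha|Ha].
        * apply Htrans with (j x y). apply Htrans with (m w (j x y)); auto.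
          apply (proj1 (Hm _ _)); right; auto.
          apply (proj2 (Hj _ _)). exact Ha.
        * unfold single in Ha; subst a. apply Htrans with (m w (j x y)); auto.
          apply (proj1 (Hm _ _)); left; auto.
    - intros x. destruct (Hcm x) as [E1 E2]. split; intros w; split.
      + intros Hw a _. apply Htrans with z; auto. rewrite <- E1.
        apply (proj2 (Hm _ _)). exact Hw.
      + intros Hw a _. apply Hw. exact I.
      + intros Hw a _. apply Htrans with o; auto. rewrite <- E2.
        apply (proj2 (Hj _ _)). exact Hw.
      + intros Hw a _. apply Hw. exact I. }
  split; split; auto.
Qed.
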